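(* Let $G$ be a locally compact Abelian group with a fixed Haar measure $\lambda_G$, and let $\Omega\subset G$ be a measurable subset with $\lambda_G(\Omega)<\infty$. Then there is an open $\sigma$-compact subgroup $H$ of $G$ with $\Omega\subset H$ such that $$\mathcal{D}_G(\Omega)=\mathcal{D}_H(\Omega),$$ where $H$ is equipped with the Haar measure $\lambda_H:=\lambda_G|_H$.
   Context: All locally compact Abelian (LCA) groups are assumed Hausdorff, with identity $0$. A function $f:G\to\mathbb{C}$ is positive definite if $\sum_{i,j=1}^n c_i\overline{c_j} f(g_i-g_j)\ge 0$ for all $n\in\mathbb{N}$, $c_i\in\mathbb{C}$, $g_i\in G$. $P_1(G)$ denotes the set of continuous positive definite functions $f:G\to\mathbb{R}$ with $f(0)=1$. For $f:G\to\mathbb{R}$, $f_+(g):=\max\{f(g),0\}$ and $\operatorname{supp} f:=\overline{\{g\in G: f(g)\neq 0\}}$. For a LCA group $G$ with Haar measure $\lambda_G$ and $\Omega\subset G$, define $$\mathcal{G}_G(\Omega):=\{f\in P_1(G)\cap L^1(G): \operatorname{supp} f_+\subset\Omega\},\qquad \mathcal{D}_G(\Omega):=\sup_{f\in\mathcal{G}_G(\Omega)}\int_G f\,d\lambda_G,$$ with the convention that $\mathcal{D}_G(\Omega)=0$ when $\mathcal{G}_G(\Omega)$ is empty. The same definitions apply with $H$ in place of $G$. *)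

(* Defs.v *)
From HB Require Import structures.
From mathcomp Require Import all_boot all_order all_algebra.
From mathcomp Require Import all_classical all_reals all_analysis.
From mathcomp Require Import complex.

Set Implicit Arguments.
Unset Strict Implicit.
Unset Printing Implicit Defensive.

Import Order.TTheory GRing.Theory Num.Theory.
Import numFieldNormedType.Exports.
Local Open Scope classical_set_scope.
Local Open Scope ring_scope.

Section pointed_group.
Variable G : topologicalZmodType.
(* G viewed as a pointed type, with base point 0 (needed by the library's
   generated sigma-algebra construction). *)
Definition ptd_grp : Type := G.
HB.instance Definition _ := Choice.on ptd_grp.
HB.instance Definition _ := isPointed.Build ptd_grp 0.
End pointed_group.

Definition Borel (G : topologicalZmodType) :=
  @g_sigma_algebraType (ptd_grp G) (@open G).

(* Haar measure on an LCA group (Folland's definition): a nonzero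
   translation-invariant Radon measure on the Borel sets, i.e. finite on
   compact sets, outer regular on Borel sets, inner regular on open sets. *)
Definition haar_measure (R : realType) (G : topologicalZmodType)
    (mu : {measure set (Borel G) -> \bar R}) : Prop :=
  [/\ forall (x : G) (A : set (Borel G)), measurable A ->
        mu [set x + a | a in A] = mu A,
      forall K : set G, compact K -> (mu K < +oo)%E,
      mu [set: G] != 0%E,
      forall A : set (Borel G), measurable A ->
        mu A = ereal_inf [set mu U | U in [set U : set G | open U /\ A `<=` U]]
    & forall U : set G, open U ->
        mu U = ereal_sup [set mu K | K in [set K : set G | compact K /\ K `<=` U]]].

Definition is_subgroup (G : zmodType) (H : set G) : Prop :=
  H 0 /\ forall x y, H x -> H y -> H (x - y).

Definition sigma_compact (G : topologicalType) (H : set G) : Prop :=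
  exists K : nat -> set G, (forall n, compact (K n)) /\ H = \bigcup_n K n.

(* f (restricted to the subgroup H) is positive definite on H:
   sum_{i,j} c_i conj(c_j) f(g_i - g_j) >= 0 for all complex c_i and g_i in H.
   (In R[i], 0 <= z means z is real and nonnegative.) *)
Definition pos_def_on (R : rcfType) (G : zmodType) (H : set G) (f : G -> R) : Prop :=
  forall (n : nat) (c : 'I_n -> R[i]) (g : 'I_n -> G),
    (forall k, H (g k)) ->
    0 <= \sum_(k < n) \sum_(l < n) c k * ((c l)^*)%C * ((f (g k - g l))%:C)%C.

(* The class G_H(Omega) for an open subgroup H of G (with H = setT giving
   G_G(Omega)), where functions on H are represented by functions G -> R whose
   values outside H are irrelevant; lambda_H is mu restricted to H.
   supp f_+ is the closure in H of {g in H | f_+(g) <> 0}. *)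
Definition GG (R : realType) (G : topologicalZmodType)
    (mu : {measure set (Borel G) -> \bar R}) (H Omega : set G) : set (G -> R) :=
  [set f : G -> R |
     [/\ pos_def_on H f,
         {within H, continuous f},
         f 0 = 1,
         mu.-integrable (H : set (Borel G)) (fun x => (f x)%:E)
       & H `&` closure [set g | H g /\ Num.max (f g) 0 != 0] `<=` Omega]].

Definition DD (R : realType) (G : topologicalZmodType)
    (mu : {measure set (Borel G) -> \bar R}) (H Omega : set G) : \bar R :=
  if pselect (GG mu H Omega = set0) then 0%E
  else ereal_sup [set (\int[mu]_(x in (H : set (Borel G))) (f x)%:E)%E
                 | f in GG mu H Omega].

(* Main.v *)
Require Import Defs.
From HB Require Import structures.
From mathcomp Require Import all_boot all_order all_algebra.
From mathcomp Require Import all_classical all_reals all_analysis.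
From mathcomp Require Import complex.
From mathcomp Require Import lra.

Import Order.TTheory GRing.Theory Num.Theory.
Import numFieldNormedType.Exports.
Local Open Scope classical_set_scope.
Local Open Scope ring_scope.
Section Top.
Variable G : topologicalZmodType.

Lemma nbhs_shift (y : G) {V : set G} : nbhs (0:G) V -> nbhs y (fun z => V (z - y)).
Proof.
move=> V0.
have c : (fun z => z - y) @ nbhs y --> (y - y).
  apply: (@continuous_comp _ _ _ (fun z => (z, y)) (fun p : G * G => p.1 - p.2)).
    by apply: cvg_pair; [exact: cvg_id|exact: cvg_cst].
  exact: sub_continuous.
rewrite subrr in c; exact: c.
Qed.

Lemma subgroupN (H : set G) x : is_subgroup H -> H x -> H (- x).
Proof. by move=> [H0 HB] Hx; rewrite -sub0r; apply: HB. Qed.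

Lemma subgroupD (H : set G) x y : is_subgroup H -> H x -> H y -> H (x + y).
Proof.
move=> sH Hx Hy; rewrite -[y]opprK; apply: sH.2 => //; exact: subgroupN.
Qed.

Lemma subgroup_open (H V : set G) : is_subgroup H -> nbhs (0:G) V -> V `<=` H ->
  open H /\ closed H.
Proof.
move=> sH V0 VH; split.
  rewrite openE => x Hx; suff : nbhs x H by []; apply: filterS (nbhs_shift x V0) => z Vz.
  by rewrite -(subrK x z); apply: subgroupD => //; exact: VH.
rewrite -openC openE => y nHy; suff : nbhs y (~` H) by []; apply: filterS (nbhs_shift y V0) => z Vz Hz.
apply: nHy.
have -> : y = z - (z - y) by rewrite opprB addrC subrK.
by apply: sH.2 => //; exact: VH.
Qed.

Lemma compact_subset2 (A B : set G) : compact A -> compact B ->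
  compact ((fun p : G * G => p.1 - p.2) @` (A `*` B)).
Proof.
move=> cA cB; apply: continuous_compact; last exact: compact_setX.
apply: continuous_subspaceT; exact: sub_continuous.
Qed.
Lemma subKadd (a b : G) : a - b + (b - a) = 0.
Proof. by rewrite addrA subrK subrr. Qed.
End Top.
Definition ptop (G : topologicalZmodType) : Type := G.
HB.instance Definition _ (G : topologicalZmodType) := Topological.on (ptop G).
HB.instance Definition _ (G : topologicalZmodType) := isPointed.Build (ptop G) 0.

Lemma compact_cover_G {G : topologicalZmodType} (K : set G) :
  compact K -> @cover_compact G K.
Proof.
move=> cK; have : @compact (ptop G) K by [].
by rewrite compact_cover.
Qed.

Section Meas.
Variables (R : realType) (G : topologicalZmodType).
Hypothesis hausG : hausdorff_space G.
Variable mu : {measure set (Borel G) -> \bar R}.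
Hypothesis haar : haar_measure mu.

Lemma open_mble (A : set G) : open A -> measurable (A : set (Borel G)).
Proof. by move=> oA; apply: sub_sigma_algebra. Qed.

Lemma closed_mble (A : set G) : closed A -> measurable (A : set (Borel G)).
Proof.
move=> cA; rewrite -[A]setCK; apply: measurableC; apply: open_mble.
by rewrite openC.
Qed.

Lemma cont_tr (a : G) : continuous (fun z : G => z + a).
Proof.
move=> z.
apply: (@continuous_comp _ _ _ (fun z => (z, a)) (fun p : G * G => p.1 + p.2)).
  by apply: cvg_pair; [exact: cvg_id|exact: cvg_cst].
exact: add_continuous.
Qed.

Lemma open_tr (a : G) (W : set G) : open W -> open [set z | W (z + a)].
Proof.
move=> oW; have -> : [set z | W (z + a)] = (fun z => z + a) @^-1` W by [].
by apply: open_comp => // x _; exact: cont_tr.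
Qed.

Lemma open_pos (W : set G) : open W -> W !=set0 -> mu W != 0%E.
Proof.
case: haar => tr fin nz oreg ireg oW [w Ww]; apply/negP => /eqP W0.
have K0 : forall K : set G, compact K -> mu K = 0%E.
  move=> K cK.
  have cK' := @compact_cover_G G K cK.
  have := cK' G setT (fun k => [set z | W (z + (w - k))]).
  case.
  - by move=> k _; exact: open_tr.
  - move=> k Kk; exists k => //=; by rewrite addrC subrK.
  move=> D' _ KD.
  pose F n := [set z | W (z + (w - nth 0 (finmap.enum_fset D') n))].
  have mF : forall n, measurable (F n : set (Borel G)).
    by move=> n; apply: open_mble; exact: open_tr.
  have KF : K `<=` \bigcup_n F n.
    move=> x /KD [i /= Di fxi]; exists (index i (finmap.enum_fset D')) => //.
    by rewrite /F /= nth_index.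
  have muF : forall n, mu (F n) = 0%E.
    move=> n; rewrite -W0 -(tr (nth 0 (finmap.enum_fset D') n - w) W); last exact: open_mble.
    congr (mu _); apply/seteqP; split => z /=.
      move=> Wz; exists (z + (w - nth 0 (finmap.enum_fset D') n)) => //.
      by rewrite addrCA subKadd addr0.
    by case=> a Wa <-; rewrite /F /= -addrA addrCA subKadd addr0.
  apply/eqP; rewrite eq_le measure_ge0 andbT.
  have mK : measurable (K : set (Borel G)).
    exact: closed_mble (compact_closed hausG cK).
  apply: (le_trans (measure_sigma_subadditive mu mF mK KF)).
  by rewrite eseries0.
have : (mu [set: G] <= 0)%E.
  rewrite ireg; last exact: openT.
  by apply: ge_ereal_sup => _ [K [cK _] <-]; rewrite K0.
by move=> le0; move/negP: nz; apply; rewrite eq_le le0 measure_ge0.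
Qed.
End Meas.

Fixpoint Dseq {G : zmodType} (V : set G) (K : nat -> set G) (n : nat) : set G :=
  match n with
  | 0 => V `|` K 0
  | n'.+1 => ((fun p : G * G => p.1 - p.2) @` (Dseq V K n' `*` Dseq V K n')) `|` K n'.+1
  end.

Section Dseq.
Variables (G : topologicalZmodType) (V : set G) (K : nat -> set G).
Hypothesis V0 : V 0.

Lemma Dseq0 n : Dseq V K n 0.
Proof.
elim: n => [|n IH] /=; first by left.
by left; exists (0, 0) => //=; rewrite subr0.
Qed.

Lemma Dseq_mono n : Dseq V K n `<=` Dseq V K n.+1.
Proof. by move=> x Dx /=; left; exists (x, 0) => //=; [split=> //; exact: Dseq0|rewrite subr0]. Qed.

Lemma Dseq_le n m : (n <= m)%N -> Dseq V K n `<=` Dseq V K m.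
Proof.
elim: m => [|m IH]; first by rewrite leqn0 => /eqP ->.
rewrite leq_eqVlt => /orP[/eqP -> //|]; rewrite ltnS => /IH nm x /nm.
exact: Dseq_mono.
Qed.

Lemma Dseq_compact : compact V -> (forall n, compact (K n)) -> forall n, compact (Dseq V K n).
Proof.
move=> cV cK; elim=> [|n IH] /=; first exact: compactU.
by apply: compactU => //; exact: compact_subset2.
Qed.

Definition Hset := \bigcup_n Dseq V K n.

Lemma Hset_subgroup : is_subgroup Hset.
Proof.
split; first by exists 0%N => //; exact: Dseq0.
move=> x y [n _ Dx] [m _ Dy]; exists (maxn n m).+1 => //=; left.
exists (x, y) => //; split=> /=.
  by apply: Dseq_le Dx; exact: leq_maxl.
by apply: Dseq_le Dy; exact: leq_maxr.
Qed.

Lemma V_Hset : V `<=` Hset.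
Proof. by move=> x Vx; exists 0%N => //; left. Qed.

Lemma K_Hset n : K n `<=` Hset.
Proof. by move=> x Kx; exists n => //; case: n Kx => [|n] Kx /=; right. Qed.
End Dseq.

Lemma real_contra {R : realType} {wv kv u y z N : R} : 0 < wv -> 0 < N -> y < N ->
  y * wv = 1 -> z * N = 1 -> wv + kv <= u -> u - z < kv -> False.
Proof. move=> *; nra. Qed.

Lemma exists_H (R : realType) (G : topologicalZmodType)
    (hausG : hausdorff_space G) (lcG : locally_compact [set: G])
    (mu : {measure set (Borel G) -> \bar R}) (haar : haar_measure mu)
    (Omega : set G) (mOmega : measurable (Omega : set (Borel G)))
    (finOmega : (mu Omega < +oo)%E) :
  exists H : set G,
    [/\ open H, closed H, is_subgroup H, sigma_compact H & Omega `<=` H].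
Proof.
have haar' := haar.
case: haar' => tr fin nz oreg ireg.
have [V V0 [cV _]] := lcG 0 I.
have V0' : nbhs (0 : G) V by move: V0; rewrite withinET.
have [_ [U [oU OU] <-] muU] : (exists2 y, [set mu U | U in [set U : set G | open U /\ Omega `<=` U]] y & (y < +oo)%E).
  by apply: ereal_inf_lt; rewrite -oreg.
have mU := @open_mble _ _ oU.
have muU_fin : mu U \is a fin_num by rewrite ge0_fin_numE ?measure_ge0.
set u := fine (mu U).
have Uu : mu U = u%:E by rewrite fineK.
have Kex : forall n : nat, exists K : set G,
    [/\ compact K, K `<=` U & ((u - (n.+1%:R)^-1)%:E < mu K)%E].
  move=> n.
  have : ((u - (n.+1%:R)^-1)%:E < mu U)%E.
    rewrite Uu lte_fin; have : 0 < (n.+1%:R : R)^-1 by rewrite invr_gt0.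
    by move=> h; rewrite gtrBl.
  rewrite ireg // => /ereal_sup_gt [_ [K [cK KU] <-] lt].
  by exists K.
have [K HK] := choice Kex.
set H := @Hset G V K.
have sH : is_subgroup H := @Hset_subgroup G V K (nbhs_singleton V0').
have [oH cH] := @subgroup_open G H V sH V0' (@V_Hset G V K).
exists H; split => //.
  exists (Dseq V K) => //; split=> //.
  apply: (@Dseq_compact G V K) => //; first by move=> n; have [] := HK n.
apply: subset_trans OU _.
move=> x Ux; apply/not_notP => nHx.
pose W := U `&` ~` H.
have oW : open W by apply: openI => //; rewrite openC.
have mW := @open_mble _ _ oW.
have W0 : mu W != 0%E by apply: (@open_pos R G hausG mu haar W oW); exists x.
have WU : (mu W <= mu U)%E by apply: le_measure; rewrite ?inE //; exact: subIsetl.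
have WK : forall n, (mu W + mu (K n) <= mu U)%E.
  move=> n; have [cKn KnU _] := HK n.
  have mKn := @closed_mble G _ (compact_closed hausG cKn).
  rewrite -measureU //; last first.
    apply/seteqP; split => // z [[_ nHz] Kz]; apply: nHz; exact: (@K_Hset G V K n).
  apply: le_measure; rewrite ?inE //; first exact: measurableU.
  by move=> z [[]|/KnU].
have W_fin : mu W \is a fin_num.
  by rewrite ge0_fin_numE ?measure_ge0 //; apply: le_lt_trans WU muU.
set wv := fine (mu W).
have Ww : mu W = wv%:E by rewrite fineK.
have wv0 : 0 < wv.
  by rewrite lt_def -lee_fin -Ww measure_ge0 andbT -(@eqe R) -Ww.
set n := Num.Def.truncn (wv^-1).
have hn := truncnS_gt (wv^-1); rewrite -/n in hn.
have [cKn KnU ltK] := HK n.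
have Kn_fin : mu (K n) \is a fin_num by rewrite ge0_fin_numE ?measure_ge0 //; exact: fin.
move: (WK n) ltK; rewrite Uu Ww -(fineK Kn_fin) -EFinD !lee_fin !lte_fin.
set kv := fine (mu (K n)); set N := (n.+1%:R : R) => h1 h2.
have N0 : 0 < N by rewrite ltr0n.
have e1 : wv^-1 * wv = 1 by rewrite mulVf // gt_eqF.
have e2 : N^-1 * N = 1 by rewrite mulVf // gt_eqF.
have hn' : wv^-1 < N by exact: hn.
exact: (real_contra wv0 N0 hn' e1 e2 h1 h2).
Qed.

Definition fext {R : rcfType} {G : zmodType} (H : set G) (f : G -> R) : G -> R :=
  fun x => if x \in H then f x else 0.

Lemma subsub {G : zmodType} (a b c : G) : (a - c) - (a - b) = b - c.
Proof. by rewrite opprB addrC addrA subrK. Qed.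

Lemma subsub2 {G : zmodType} (a b c : G) : (a - c) - (b - c) = a - b.
Proof. by rewrite opprB addrA subrK. Qed.

Lemma subgroupN_z {G : zmodType} (H : set G) x : is_subgroup H -> H x -> H (- x).
Proof. by move=> [H0 HB] Hx; rewrite -sub0r; apply: HB. Qed.

Lemma pos_def_ext (R : rcfType) (G : zmodType) (H : set G) (f : G -> R) :
  is_subgroup H -> pos_def_on H f -> pos_def_on [set: G] (fext H f).
Proof.
move=> sH pd n c g _.
pose P (k : 'I_n) := [pred l : 'I_n | `[< H (g k - g l) >]].
have Pkk k : P k k by rewrite /= subrr; apply/asboolP; exact: sH.1.
pose r k := [arg min_(l < k | P k l) (l : nat)].
have rP k : P k (r k) /\ forall l, P k l -> (r k <= l)%N.
  by rewrite /r; case: arg_minnP => // i Pi mini; split.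
have Peq k l : H (g k - g l) -> forall j, P k j = P l j.
  move=> Hkl j; rewrite /=; apply/asboolP/asboolP => Hj.
  - by rewrite -(subsub (g k)); exact: sH.2.
  - rewrite -(subsub (g l)); apply: sH.2 => //.
    by rewrite -opprB; exact: subgroupN_z sH Hkl.
have req k l : H (g k - g l) -> r k = r l.
  move=> Hkl; apply/val_inj/eqP; rewrite eqn_leq; apply/andP; split.
    by apply: (rP k).2; rewrite (Peq k l Hkl); exact: (rP l).1.
  by apply: (rP l).2; rewrite -(Peq k l Hkl); exact: (rP k).1.
pose h k := g k - g (r k).
have hH k : H (h k) by have := (rP k).1 => /asboolP.
have reqH k l : r k = r l -> H (g k - g l).
  by move=> e; rewrite -(subsub2 _ _ (g (r k))); apply: sH.2; [exact: hH|rewrite e; exact: hH].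
pose c' (j k : 'I_n) := if r k == j then c k else 0.
have term k l : c k * (c l)^*%C * ((fext H f (g k - g l))%:C)%C =
    \sum_(j < n) c' j k * (c' j l)^*%C * ((f (h k - h l))%:C)%C.
  rewrite (bigD1 (r k)) //= big1 ?addr0; last first.
    by move=> j nj; rewrite /c' eq_sym (negbTE nj) mul0r mul0r.
  rewrite /c' eqxx; case: (eqVneq (r l) (r k)) => [e|ne].
    rewrite /fext.
    have Hkl : H (g k - g l) by apply: reqH; rewrite e.
    rewrite (mem_set Hkl).
    by rewrite /h e subsub2.
  rewrite conjc0 mulr0 mul0r /fext.
  have nH : (g k - g l \in H) = false.
    apply/negbTE; apply/negP; rewrite in_setE => /req e; by rewrite e eqxx in ne.
  by rewrite nH mulr0.
rewrite (eq_bigr (fun k => \sum_(l < n) \sum_(j < n) c' j k * (c' j l)^*%C * ((f (h k - h l))%:C)%C)); last first.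
  by move=> k _; apply: eq_bigr => l _; exact: term.
rewrite (eq_bigr (fun k => \sum_(j < n) \sum_(l < n) c' j k * (c' j l)^*%C * ((f (h k - h l))%:C)%C)); last first.
  by move=> k _; rewrite exchange_big.
rewrite exchange_big /=; apply: sumr_ge0 => j _.
exact: pd.
Qed.

Lemma open_nbhs_at {G : topologicalType} (A : set G) x : open A -> A x -> nbhs x A.
Proof. by rewrite openE => oA /oA. Qed.

Section GGsec.
Variables (R : realType) (G : topologicalZmodType).
Variable mu : {measure set (Borel G) -> \bar R}.
Variables (H Omega : set G).
Hypotheses (oH : open H) (cH : closed H) (sH : is_subgroup H) (OH : Omega `<=` H).

Let mH : measurable (H : set (Borel G)) := @open_mble G H oH.

Lemma GG_restrict f : GG mu [set: G] Omega f -> GG mu H Omega f.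
Proof.
case=> pd cf f0 intf supp; split => //.
- by move=> n c g _; apply: pd.
- exact: continuous_subspaceW cf.
- exact: integrableS intf.
- move=> x [Hx clx]; apply: supp; split => //; apply: closureS clx => y [_ ?]; by split.
Qed.

Lemma GG_le0 f : GG mu [set: G] Omega f -> forall x, ~ H x -> f x <= 0.
Proof.
case=> _ _ _ _ supp x nHx; rewrite leNgt; apply/negP => fx0.
apply: nHx; apply: OH; apply: supp; split => //; apply: subset_closure; split => //.
by rewrite max_l ?(ltW fx0) // gt_eqF.
Qed.

Lemma int_restrict f : GG mu [set: G] Omega f ->
  (\int[mu]_(x in [set: G]) (f x)%:E <= \int[mu]_(x in H) (f x)%:E)%E.
Proof.
move=> Gf; have := Gf; case=> _ _ _ intf _.
have mnH : measurable (~` H : set (Borel G)) by exact: measurableC.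
have mf := measurable_int mu intf.
rewrite -(setUCr H) integral_setU //; last first.
  - by apply/disj_setPS => x [].
  - by rewrite setUCr.
apply: geeDl.
rewrite -(integral0 mu (~` H)).
apply: le_integral => //.
- apply: integrableS intf => //.
- exact: integrable0.
- move=> x; rewrite in_setE => nHx /=; rewrite lee_fin; exact: (GG_le0 _ Gf).
Qed.

Lemma GG_extend f : GG mu H Omega f -> GG mu [set: G] Omega (fext H f).
Proof.
case=> pd cf f0 intf supp; split.
- exact: pos_def_ext.
- apply: continuous_subspaceT => x.
  have cfin : {in H, continuous f} by rewrite -continuous_open_subspace.
  case: (pselect (H x)) => Hx.
  + have eq : {near x, f =1 fext H f}.
      near=> y; rewrite /fext mem_set //; near: y; exact: open_nbhs_at oH Hx.
    rewrite /continuous_at {2}/fext (mem_set Hx).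
    apply: cvg_trans (near_eq_cvg eq) (cfin x _); exact: mem_set.
  + have onH : open (~` H) by rewrite openC.
    have eq : {near x, (fun=> 0) =1 fext H f}.
      near=> y; rewrite /fext; case: ifP => // /set_mem Hy; exfalso.
      move: Hy; near: y; exact: open_nbhs_at onH Hx.
    rewrite /continuous_at.
    have -> : fext H f x = 0 by rewrite /fext; case: ifP => // /set_mem.
    apply: cvg_trans (near_eq_cvg eq) _; exact: cvg_cst.
- by rewrite /fext mem_set //; exact: sH.1.
- rewrite (_ : (fun x => (fext H f x)%:E) = (fun x => (f x)%:E) \_ H).
    exact: (integrable_mkcond _ mH).1 intf.
  by apply/funext => x; rewrite /fext patchE; case: ifP.
- move=> x [_ clx].
  have S'S : [set g | [set: G] g /\ Num.max (fext H f g) 0 != 0] `<=`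
             [set g | H g /\ Num.max (f g) 0 != 0].
    move=> y [_]; rewrite /fext; case: ifP => [/set_mem Hy|_] m; first by split.
    by rewrite maxxx eqxx in m.
  have clS := closureS S'S clx.
  have Hx : H x.
    by rewrite ((closure_id H).1 cH); apply: closureS clS => y [].
  exact: supp.
Unshelve. all: by end_near.
Qed.

Lemma int_extend f :
  (\int[mu]_(x in [set: G]) (fext H f x)%:E = \int[mu]_(x in H) (f x)%:E)%E.
Proof.
rewrite [RHS]integral_mkcond; apply: eq_integral => x _.
by rewrite /fext patchE; case: ifP.
Qed.

Lemma DD_eq : DD mu [set: G] Omega = DD mu H Omega.
Proof.
rewrite /DD; case: pselect => [E1|NE1]; case: pselect => [E2|NE2] //.
- exfalso; apply: NE2; apply/seteqP; split => // f Hf.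
  by have := GG_extend _ Hf; rewrite E1.
- exfalso; apply: NE1; apply/seteqP; split => // f Gf.
  by have := GG_restrict _ Gf; rewrite E2.
apply/eqP; rewrite eq_le; apply/andP; split; apply: ge_ereal_sup => _ [f Gf <-].
  apply: le_trans (int_restrict _ Gf) _; apply: ereal_sup_ubound.
  by exists f => //; exact: (GG_restrict _ Gf).
rewrite -int_extend; apply: ereal_sup_ubound.
by exists (fext H f) => //; exact: (GG_extend _ Gf).
Qed.
End GGsec.

Theorem theorem3 (R : realType) (G : topologicalZmodType)
    (hausG : hausdorff_space G) (lcG : locally_compact [set: G])
    (mu : {measure set (Borel G) -> \bar R}) (haar : haar_measure mu)
    (Omega : set G) (mOmega : measurable (Omega : set (Borel G)))
    (finOmega : (mu Omega < +oo)%E) :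
  exists H : set G,
    [/\ open H, is_subgroup H, sigma_compact H, Omega `<=` H
      & DD mu [set: G] Omega = DD mu H Omega].
Proof.
have [H [oH cH sH scH OH]] := @exists_H R G hausG lcG mu haar Omega mOmega finOmega.
exists H; split => //.
exact: (@DD_eq R G mu H Omega oH cH sH OH).
Qed.
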